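(* Let $K$ be a field of characteristic zero and $m\ge1$. The tropical valuation $\operatorname{trop}:K(\!(\mathbf{t})\!)\to V\mathbb{B}(\mathbf{t})$ is a surjective $K$-algebra B\'ezout valuation; in particular, for all $a,b\in K(\!(\mathbf{t})\!)$ there exist $x,y\in K(\!(\mathbf{t})\!)^\circ$ with $\operatorname{trop}(xa+yb)=\operatorname{trop}(a)\oplus\operatorname{trop}(b)$.
   Context: $\mathbf{t}=(t_1,\dots,t_m)$, $K(\!(\mathbf{t})\!)=\operatorname{Frac}K[\![\mathbf{t}]\!]$. For $A\subseteq\mathbb{N}^m$ the Newton polyhedron is $\operatorname{conv}(A)+\mathbb{R}^m_{\ge0}$. $V\mathbb{B}[\mathbf{t}]$ is the idempotent semiring of subsets of $\mathbb{N}^m$ equal to the vertex set of their Newton polyhedron, with $a\oplus b$ = vertex set of the Newton polyhedron of $a\cup b$ and $a\odot b$ = vertex set of that of the Minkowski sum $a+b$ ($0=\emptyset$, $1=\{0\}$). $V\mathbb{B}(\mathbf{t})$ is its fraction semifield, with $\frac ab\oplus\frac cd=\frac{a\odot d\oplus b\odot c}{b\odot d}$, $\frac ab\odot\frac cd=\frac{a\odot c}{b\odot d}$, ordered by $x\le y$ iff $x\oplus y=y$. $\operatorname{trop}(f)$ for $f\in K[\![\mathbf{t}]\!]$ is the vertex set of the Newton polyhedron of $\operatorname{Supp}(f)$, and $\operatorname{trop}(f/g)=\operatorname{trop}(f)/\operatorname{trop}(g)$; this is known to be a surjective valuation (multiplicative, $\operatorname{trop}(a+b)\le\operatorname{trop}(a)\oplus\operatorname{trop}(b)$,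 zero only at $0$). $K(\!(\mathbf{t})\!)^\circ=\{q:\operatorname{trop}(q)\le1\}$. A B\'ezout valuation $v$ on a field $R$ is one such that for all $a,b$ there are $x,y\in R^\circ$ with $v(xa+yb)=v(a)+v(b)$; ''$K$-algebra'' means $\operatorname{trop}(c)=1$ for nonzero constants $c\in K$. *)

(* Defs.v *)
From Stdlib Require Import Reals List.
From HB Require Import structures.
From mathcomp Require Import all_boot all_order all_algebra.
Set Implicit Arguments. Unset Strict Implicit. Unset Printing Implicit Defensive.
Import Order.TTheory GRing.Theory Num.Theory.
Local Open Scope ring_scope.

Section Defs.
Variable m : nat.

Definition mon := 'I_m -> nat.
Definition mset := mon -> Prop.
Definition sameset (A B : mset) : Prop := forall e, A e <-> B e.

Definition rpoint := 'I_m -> R.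

Definition wcomb (l : list (R * mon)) : rpoint :=
  fun i => fold_right (fun c acc => Rplus (Rmult c.1 (INR (c.2 i))) acc) R0 l.
Definition wsum (l : list (R * mon)) : R :=
  fold_right (fun c acc => Rplus c.1 acc) R0 l.

(* Newton polyhedron  conv(A) + R^m_{>=0} *)
Definition newton_polyhedron (A : mset) : rpoint -> Prop := fun p =>
  exists l : list (R * mon),
    Forall (fun c => A c.2 /\ Rle R0 c.1) l /\ wsum l = R1 /\
    forall i, Rle (wcomb l i) (p i).

Definition is_vertex (P : rpoint -> Prop) (v : rpoint) : Prop :=
  P v /\ forall (p q : rpoint) (t : R), P p -> P q -> Rlt R0 t -> Rlt t R1 ->
    (forall i, v i = Rplus (Rmult t (p i)) (Rmult (Rminus R1 t) (q i))) ->
    forall i, p i = q i.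

Definition vert (A : mset) : mset := fun e =>
  is_vertex (newton_polyhedron A) (fun i => INR (e i)).

Definition isVB (A : mset) : Prop := sameset (vert A) A.
Definition vb0 : mset := fun _ => False.
Definition vb1 : mset := fun e => forall i, e i = 0%N.
Definition vbplus (A B : mset) : mset := vert (fun e => A e \/ B e).
Definition vbmul (A B : mset) : mset :=
  vert (fun e => exists a b, A a /\ B b /\ forall i, e i = (a i + b i)%N).

Definition vbfrac := (mset * mset)%type.
Definition isVBf (x : vbfrac) : Prop :=
  isVB x.1 /\ isVB x.2 /\ exists e, x.2 e.           (* denominator <> 0 *)
Definition vbeq (x y : vbfrac) : Prop :=
  sameset (vbmul x.1 y.2) (vbmul x.2 y.1).
Definition vbfplus (x y : vbfrac) : vbfrac :=
  (vbplus (vbmul x.1 y.2) (vbmul x.2 y.1), vbmul x.2 y.2).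
Definition vbfmul (x y : vbfrac) : vbfrac := (vbmul x.1 y.1, vbmul x.2 y.2).
Definition vbf0 : vbfrac := (vb0, vb1).
Definition vbf1 : vbfrac := (vb1, vb1).
Definition vbfle (x y : vbfrac) : Prop := vbeq (vbfplus x y) y.

Variable K : fieldType.
Definition pser := mon -> K.
Definition supp (f : pser) : mset := fun e => f e != 0.
Definition pzero (f : pser) : Prop := forall e, f e = 0.
Definition padd (f g : pser) : pser := fun e => f e + g e.
Definition pbound (e : mon) : nat := (\sum_(i < m) e i).+1.
Definition pmul (f g : pser) : pser := fun e =>
  \sum_(a : {ffun 'I_m -> 'I_(pbound e)} | [forall i, (a i <= e i)%N])
     f (fun i => nat_of_ord (a i)) * g (fun i => (e i - a i)%N).
Definition pconst (c : K) : pser := fun e => if [forall i, e i == 0%N] then c else 0.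

(* ---------- K((t)) = Frac K[[t]]: pairs f/g with g <> 0 ---------- *)
Definition lfrac := (pser * pser)%type.
Definition lvalid (q : lfrac) : Prop := ~ pzero q.2.
Definition leq_frac (q q' : lfrac) : Prop := pzero (fun e => pmul q.1 q'.2 e - pmul q'.1 q.2 e).
Definition ladd (p q : lfrac) : lfrac := (padd (pmul p.1 q.2) (pmul q.1 p.2), pmul p.2 q.2).
Definition lmul (p q : lfrac) : lfrac := (pmul p.1 q.1, pmul p.2 q.2).
Definition lconst (c : K) : lfrac := (pconst c, pconst 1).

Definition trop_ps (f : pser) : mset := vert (supp f).
Definition trop (q : lfrac) : vbfrac := (trop_ps q.1, trop_ps q.2).

End Defs.

(* Main.v *)
Require Import Defs.
From Stdlib Require Import Reals List Lra Classical FunctionalExtensionality ClassicalDescription.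
From HB Require Import structures.
From mathcomp Require Import all_boot all_order all_algebra.
From mathcomp Require Import zify.
Import Order.TTheory GRing.Theory Num.Theory.
Set Implicit Arguments. Unset Strict Implicit.

Section Geo.
Variable m : nat.
Local Open Scope R_scope.
Notation NP := (@newton_polyhedron m).
Definition pt (e : mon m) : rpoint m := fun i => INR (e i).
Definition nle (A B : mset m) := forall e, A e -> NP B (pt e).
Definition msum (A B : mset m) : mset m :=
  fun e => exists a b, A a /\ B b /\ forall i, e i = (a i + b i)%nat.
Definition munion (A B : mset m) : mset m := fun e => A e \/ B e.

Lemma wcomb_nil i : wcomb (m:=m) nil i = 0. Proof. reflexivity. Qed.
Lemma wcomb_cons c l i : wcomb (m:=m) (c :: l) i = c.1 * INR (c.2 i) + wcomb l i.
Proof. reflexivity. Qed.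
Lemma wsum_nil : wsum (m:=m) nil = 0. Proof. reflexivity. Qed.
Lemma wsum_cons c l : wsum (m:=m) (c :: l) = c.1 + wsum l. Proof. reflexivity. Qed.

Lemma wsum_app l1 l2 : wsum (m:=m) (app l1 l2) = wsum l1 + wsum l2.
Proof. induction l1 as [|c l IH]; cbn [app]; rewrite ?wsum_nil ?wsum_cons ?IH; lra. Qed.
Lemma wcomb_app l1 l2 i : wcomb (m:=m) (app l1 l2) i = wcomb l1 i + wcomb l2 i.
Proof. induction l1 as [|c l IH]; cbn [app]; rewrite ?wcomb_nil ?wcomb_cons ?IH; lra. Qed.

Definition scale (s : R) (l : list (R * mon m)) := map (fun c => (s * c.1, c.2)) l.
Lemma wsum_scale s l : wsum (scale s l) = s * wsum l.
Proof. induction l as [|[x e] l IH]; cbn [map]; rewrite ?wsum_nil ?wsum_cons ?IH /=; first [reflexivity|lra]. Qed.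
Lemma wcomb_scale s l i : wcomb (scale s l) i = s * wcomb l i.
Proof. induction l as [|[x e] l IH]; cbn [map]; rewrite ?wcomb_nil ?wcomb_cons ?IH /=; first [reflexivity|lra]. Qed.
Definition shift (b : mon m) (l : list (R * mon m)) : list (R * mon m) :=
  map (fun c => (c.1, fun i => (c.2 i + b i)%nat)) l.
Lemma wsum_shift b l : wsum (shift b l) = wsum l.
Proof. induction l as [|[x e] l IH]; cbn [map]; rewrite ?wsum_nil ?wsum_cons ?IH /=; first [reflexivity|lra]. Qed.
Lemma wcomb_shift b l i : wcomb (shift b l) i = wcomb l i + wsum l * INR (b i).
Proof. induction l as [|[x e] l IH]; cbn [map]; rewrite ?wsum_nil ?wsum_cons ?wcomb_nil ?wcomb_cons ?IH /= ?plus_INR; lra. Qed.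

Lemma wsum_nonneg (P : mon m -> Prop) l :
  Forall (fun c => P c.2 /\ 0 <= c.1) l -> 0 <= wsum l.
Proof. induction l as [|c l IH]; intro H; rewrite ?wsum_nil ?wsum_cons; [lra|].
inversion H; subst. destruct H2. specialize (IH H3). lra. Qed.
Lemma wcomb_nonneg (P : mon m -> Prop) l i :
  Forall (fun c => P c.2 /\ 0 <= c.1) l -> 0 <= wcomb l i.
Proof. induction l as [|c l IH]; intro H; rewrite ?wcomb_nil ?wcomb_cons; [lra|].
inversion H as [|c' l' Hc Hl]; subst. destruct Hc as [_ Hc]. specialize (IH Hl).
have Hp := pos_INR (c.2 i). have := Rmult_le_pos _ _ Hc Hp. lra. Qed.

Lemma NP_pt (A : mset m) e : A e -> NP A (pt e).
Proof. intro H. exists ((1, e) :: nil). split; [constructor; [simpl; split; [exact H|lra]|constructor]|].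
split; [rewrite wsum_cons wsum_nil /=; lra|]. intro i; rewrite wcomb_cons wcomb_nil /pt /=. lra. Qed.

Lemma NP_up (A : mset m) p q : NP A p -> (forall i, p i <= q i) -> NP A q.
Proof. intros [l [H1 [H2 H3]]] H. exists l. split; [exact H1|split; [exact H2|]].
intro i. specialize (H3 i); specialize (H i). lra. Qed.

Lemma NP_mono (A B : mset m) p : (forall e, A e -> B e) -> NP A p -> NP B p.
Proof. intros H [l [H1 H2]]. exists l. split; [|exact H2].
eapply Forall_impl; [|exact H1]. intros c [Hc1 Hc2]. split; auto. Qed.

Lemma close_list (A B : mset m) l : nle A B ->
  Forall (fun c => A c.2 /\ 0 <= c.1) l -> exists L,
  Forall (fun c => B c.2 /\ 0 <= c.1) L /\ wsum L = wsum l /\ forall i, wcomb L i <= wcomb l i.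
Proof. intro HAB. induction l as [|c l IH]; intro H.
- exists nil. split; [constructor|]. split; [reflexivity|]. intro; rewrite !wcomb_nil; lra.
- inversion H; subst. destruct H2 as [Hc Hc0]. destruct (IH H3) as [L [L1 [L2 L3]]].
  destruct (HAB _ Hc) as [l1 [M1 [M2 M3]]].
  exists (app (scale c.1 l1) L). split.
  + apply Forall_app; split; [|exact L1]. apply Forall_map.
    eapply Forall_impl; [|exact M1]. intros d [Hd1 Hd2]; simpl; split; [exact Hd1|].
    apply Rmult_le_pos; assumption.
  + split. rewrite wsum_app wsum_scale M2 L2 wsum_cons. lra.
    intro i. rewrite wcomb_app wcomb_scale wcomb_cons. specialize (L3 i). specialize (M3 i).
    have := Rmult_le_compat_l _ _ _ Hc0 M3. unfold pt. lra.
Qed.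

Lemma NP_trans (A B : mset m) p : nle A B -> NP A p -> NP B p.
Proof. intros H [l [H1 [H2 H3]]]. destruct (close_list H H1) as [L [L1 [L2 L3]]].
exists L. split; [exact L1|]. split; [congruence|]. intro i. specialize (H3 i); specialize (L3 i). lra. Qed.

Lemma nle_refl A : nle A A. Proof. intros e H; apply NP_pt, H. Qed.
Lemma nle_trans A B C : nle A B -> nle B C -> nle A C.
Proof. intros H1 H2 e He. exact (NP_trans H2 (H1 e He)). Qed.
Lemma nle_sub (A B : mset m) : (forall e, A e -> B e) -> nle A B.
Proof. intros H e He; apply NP_pt, H, He. Qed.

Lemma NP_empty (A : mset m) p : (forall e, ~ A e) -> ~ NP A p.
Proof. intros H [l [H1 [H2 _]]]. destruct l as [|c l].
- rewrite wsum_nil in H2. lra.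
- inversion H1; subst. destruct H4. exact (H _ H0). Qed.

Lemma msum_le1 A A' B : nle A A' -> nle (msum A B) (msum A' B).
Proof. intros H e [a [b [Ha [Hb He]]]]. destruct (H a Ha) as [l [l1 [l2 l3]]].
exists (shift b l). split.
- apply Forall_map. eapply Forall_impl; [|exact l1]. intros c [Hc1 Hc2]. split; [|exact Hc2].
  exists c.2, b. split; [exact Hc1|split; [exact Hb|reflexivity]].
- split; [rewrite wsum_shift; exact l2|]. intro i. rewrite wcomb_shift l2.
  specialize (l3 i). unfold pt in *. rewrite He plus_INR. lra.
Qed.

Lemma msum_comm_sub A B e : msum A B e -> msum B A e.
Proof. intros [a [b [Ha [Hb He]]]]. exists b, a. split; [exact Hb|split; [exact Ha|]].
intro i; rewrite He; apply addnC. Qed.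

Lemma msum_le A A' B B' : nle A A' -> nle B B' -> nle (msum A B) (msum A' B').
Proof. intros H1 H2. eapply nle_trans; [apply msum_le1, H1|].
eapply nle_trans; [apply nle_sub, msum_comm_sub|].
eapply nle_trans; [apply msum_le1, H2|]. apply nle_sub, msum_comm_sub. Qed.

Lemma munion_le A A' B B' : nle A A' -> nle B B' -> nle (munion A B) (munion A' B').
Proof. intros H1 H2 e [He|He].
- apply (@NP_mono A' (munion A' B')); [intros x Hx; left; exact Hx|]. apply H1, He.
- apply (@NP_mono B' (munion A' B')); [intros x Hx; right; exact Hx|]. apply H2, He.
Qed.

Lemma munion_least A B C : nle A C -> nle B C -> nle (munion A B) C.
Proof. intros H1 H2 e [He|He]; auto. Qed.


Lemma pt_inj (a e : mon m) : (forall i, pt a i = pt e i) -> a = e.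
Proof. intro H. apply functional_extensionality. intro i. apply INR_eq, H. Qed.

Lemma ext_le (A : mset m) e x : is_vertex (NP A) (pt e) -> NP A x ->
  (forall i, x i <= pt e i) -> forall i, x i = pt e i.
Proof. intros [He Hv] Hx Hle.
have Hq : NP A (fun i => 2 * pt e i - x i).
{ apply (NP_up He). intro i. specialize (Hle i). lra. }
have := Hv x _ (/2) Hx Hq. intro H.
have H' : forall i, x i = 2 * pt e i - x i.
{ apply H; try lra. intro i. lra. }
intro i. specialize (H' i). lra. Qed.

Lemma vertex_ext (P Q : rpoint m -> Prop) v : (forall p, P p <-> Q p) ->
  is_vertex P v -> is_vertex Q v.
Proof. intros H [H1 H2]. split; [apply H, H1|]. intros p q t Hp Hq. apply H2; apply H; assumption. Qed.

Lemma vert_sub (A : mset m) e : vert A e -> A e.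
Proof. intro Hv. have Hv' := Hv. destruct Hv' as [[l [H1 [H2 H3]]] _].
revert H1 H2 H3. induction l as [|[x a] l IH]; intros H1 H2 H3.
- rewrite wsum_nil in H2. lra.
- inversion H1 as [|c' l' Hc Hl]; subst. destruct Hc as [Ha Hx]. simpl in Ha, Hx.
  rewrite wsum_cons /= in H2.
  have Hr0 := wsum_nonneg Hl.
  have Hw0 : forall i, 0 <= wcomb l i by intro i; exact (wcomb_nonneg i Hl).
  destruct (Rle_lt_or_eq_dec _ _ Hx) as [Hxp|Hx0].
  +
    have Hpa : forall i, pt a i = pt e i.
    { destruct (Rle_lt_or_eq_dec x 1 ltac:(lra)) as [Hx1|Hx1].
      * set w := wcomb (scale (/(1-x)) l).
        have Hw : NP A w.
        { exists (scale (/(1-x)) l). split.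
          - apply Forall_map. eapply Forall_impl; [|exact Hl]. intros [y b] [Hb Hy]; simpl in *.
            split; [exact Hb|]. apply Rmult_le_pos; [|exact Hy]. apply Rlt_le, Rinv_0_lt_compat. lra.
          - split; [|intro; apply Rle_refl]. rewrite wsum_scale. field_simplify_eq; lra. }
        have Hwl : forall i, wcomb l i = (1 - x) * w i.
        { intro i. rewrite /w wcomb_scale. field. lra. }
        set d := fun i => pt e i - (x * pt a i + (1 - x) * w i).
        have Hd : forall i, 0 <= d i.
        { intro i. specialize (H3 i). rewrite wcomb_cons /= Hwl in H3. rewrite /d /pt. lra. }
        have HP1 : NP A (fun i => pt a i + d i).
        { apply (NP_up (NP_pt Ha)). intro i. specialize (Hd i). lra. }
        have HP2 : NP A (fun i => w i + d i).
        { apply (NP_up Hw). intro i. specialize (Hd i). lra. }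
        have Heq := proj2 Hv _ _ x HP1 HP2 Hxp Hx1.
        have Haw : forall i, pt a i = w i.
        { intro i. have := Heq ltac:(intro j; rewrite /d /pt /=; ring) i. lra. }
        apply (ext_le Hv (NP_pt Ha)). intro i. specialize (Hd i). rewrite /d -Haw in Hd. lra.
      * subst x. apply (ext_le Hv (NP_pt Ha)). intro i. specialize (H3 i). specialize (Hw0 i).
        rewrite wcomb_cons /= in H3. unfold pt in *. lra. }
    rewrite -(pt_inj Hpa). exact Ha.
  + subst x. apply IH; [exact Hl|lra|]. intro i. specialize (H3 i). rewrite wcomb_cons /= in H3. lra.
Qed.

Lemma vert_le (A : mset m) : nle (vert A) A.
Proof. intros e He. apply NP_pt, vert_sub, He. Qed.

Lemma NP_iff (A B : mset m) : nle A B -> nle B A -> forall p, NP A p <-> NP B p.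
Proof. intros H1 H2 p; split; apply NP_trans; assumption. Qed.

Lemma vert_eq (A B : mset m) : nle A B -> nle B A -> sameset (vert A) (vert B).
Proof. intros H1 H2 e; split; apply vertex_ext; intro p; [|apply iff_sym]; apply NP_iff; assumption. Qed.

Lemma dickson_k (k : nat) : forall A : mset m, exists F : list (mon m),
  (forall f, In f F -> A f) /\
  forall a, A a -> exists f, In f F /\ forall i : 'I_m, (i < k)%N -> (f i <= a i)%N.
Proof.
induction k as [|k IHk]; intro A.
- destruct (classic (exists a, A a)) as [[a0 Ha0]|Hn].
  + exists (a0 :: nil). split; [intros f [<-|[]]; exact Ha0|].
    intros a Ha. exists a0. split; [left; reflexivity|]. intros i Hi. lia.
  + exists nil. split; [intros f []|]. intros a Ha; exfalso; apply Hn; exists a; exact Ha.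
- destruct (IHk A) as [F0 [HF0 HF0c]].
  case: (ltnP k m) => Hkm; last first.
  { exists F0; split; [exact HF0|]. intros a Ha; destruct (HF0c a Ha) as [f [Hf Hfa]].
    exists f; split; [exact Hf|]. intros i Hi; apply Hfa. have := ltn_ord i. lia. }
  set ik := Ordinal Hkm.
  have [N HN] : exists N, forall f, In f F0 -> (f ik <= N)%N.
  { clear HF0 HF0c. induction F0 as [|f0 F0 IH]; [exists 0%N; intros f []|].
    destruct IH as [N HN]. exists (maxn (f0 ik) N). intros f [<-|Hf]; [apply leq_maxl|].
    apply (leq_trans (HN f Hf)), leq_maxr. }
  have E : forall n, exists G, (forall g, In g G -> A g) /\ forall a, A a -> (a ik < n)%N ->
      exists g, In g G /\ forall i : 'I_m, (i < k.+1)%N -> (g i <= a i)%N.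
  { induction n as [|n IHn].
    - exists nil. split; [intros g []|]. intros a _ Ha. lia.
    - destruct IHn as [G [HG1 HG2]].
      destruct (IHk (fun a => A a /\ a ik = n)) as [Fn [HFn1 HFn2]].
      exists (app Fn G). split.
      + intros g Hg; apply in_app_or in Hg; destruct Hg as [Hg|Hg]; [apply (HFn1 g Hg)|apply HG1, Hg].
      + intros a Ha Han. case: (ltnP (a ik) n) => Hlt.
        * destruct (HG2 a Ha Hlt) as [g [Hg Hga]]; exists g; split; [apply in_or_app; right; exact Hg|exact Hga].
        * have Haeq : a ik = n by lia.
          destruct (HFn2 a (conj Ha Haeq)) as [g [Hg Hga]]. exists g; split; [apply in_or_app; left; exact Hg|].
          intros i Hi. case: (ltnP i k) => Hik; [apply Hga, Hik|].
          have -> : i = ik by apply val_inj; simpl; lia.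
          rewrite (proj2 (HFn1 g Hg)) Haeq. apply leqnn. }
  destruct (E N.+1) as [G [HG1 HG2]].
  exists (app F0 G). split.
  + intros g Hg; apply in_app_or in Hg; destruct Hg as [Hg|Hg]; [apply HF0, Hg|apply HG1, Hg].
  + intros a Ha. destruct (HF0c a Ha) as [f [Hf Hfa]]. case: (leqP (f ik) (a ik)) => H.
    * exists f. split; [apply in_or_app; left; exact Hf|]. intros i Hi. case: (ltnP i k) => Hik; [apply Hfa, Hik|].
      have -> : i = ik by apply val_inj; simpl; lia. exact H.
    * have Hlt : (a ik < N.+1)%N by have := HN f Hf; lia.
      destruct (HG2 a Ha Hlt) as [g [Hg Hga]]. exists g; split; [apply in_or_app; right; exact Hg|exact Hga].
Qed.

Lemma dickson (A : mset m) : exists F : list (mon m),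
  (forall f, In f F -> A f) /\ forall a, A a -> exists f, In f F /\ forall i, (f i <= a i)%N.
Proof. destruct (dickson_k m A) as [F [H1 H2]]. exists F; split; [exact H1|].
intros a Ha; destruct (H2 a Ha) as [f [Hf Hfa]]; exists f; split; [exact Hf|]. intro i; apply Hfa, ltn_ord. Qed.

Definition meq (a b : mon m) : bool := [forall i, a i == b i].
Lemma meqP a b : meq a b = true <-> a = b.
Proof. split.
- move=> /forallP H. apply functional_extensionality => i. exact/eqP/H.
- move=> ->. apply/forallP => i. exact: eqxx. Qed.

Definition lf (f : mon m) (l : list (R * mon m)) := List.filter (fun c => meq c.2 f) l.
Definition lr (f : mon m) (l : list (R * mon m)) := List.filter (fun c => ~~ meq c.2 f) l.

Lemma wsum_split f l : wsum l = wsum (lf f l) + wsum (lr f l).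
Proof. induction l as [|[x e] l IH]; [rewrite /lf /lr /=; unfold wsum; simpl; lra|].
rewrite /lf /lr /=. case: (meq e f); rewrite /= ?wsum_cons IH /lf /lr; lra. Qed.

Lemma wcomb_split f l i : wcomb l i = wsum (lf f l) * pt f i + wcomb (lr f l) i.
Proof. induction l as [|[x e] l IH]; [rewrite /lf /lr /=; unfold wsum, wcomb; simpl; lra|].
rewrite /lf /lr /=. case E: (meq e f); rewrite /= ?wsum_cons ?wcomb_cons IH /lf /lr.
- move/meqP: E => ->. rewrite /pt. lra.
- lra. Qed.

Lemma Forall_filt (P : R * mon m -> Prop) g l : Forall P l -> Forall P (List.filter g l).
Proof. intro H. apply Forall_forall. intros x Hx. apply filter_In in Hx.
exact (proj1 (Forall_forall P l) H x (proj1 Hx)). Qed.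

Definition drop_f (f : mon m) (F : list (mon m)) := List.filter (fun g => ~~ meq g f) F.

Lemma step (F : list (mon m)) f : In f F -> ~ NP (fun e => In e (drop_f f F)) (pt f) ->
  is_vertex (NP (fun e => In e F)) (pt f).
Proof.
intros HfF Hn. split; [apply NP_pt, HfF|].
intros p q t [lp [Hp1 [Hp2 Hp3]]] [lq [Hq1 [Hq2 Hq3]]] Ht0 Ht1 Hf.
have Hsp := wsum_split f lp. have Hsq := wsum_split f lq.
have Hcp := wcomb_split f lp. have Hcq := wcomb_split f lq.
have Hlfp := Forall_filt (fun c => meq c.2 f) Hp1.
have Hlrp := Forall_filt (fun c => ~~ meq c.2 f) Hp1.
have Hlfq := Forall_filt (fun c => meq c.2 f) Hq1.
have Hlrq := Forall_filt (fun c => ~~ meq c.2 f) Hq1.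
fold (lf f lp) in Hlfp. fold (lr f lp) in Hlrp. fold (lf f lq) in Hlfq. fold (lr f lq) in Hlrq.
set ap := wsum (lf f lp) in Hsp Hcp. set aq := wsum (lf f lq) in Hsq Hcq.
set sp := wsum (lr f lp) in Hsp. set sq := wsum (lr f lq) in Hsq.
have Hap := wsum_nonneg (P := fun e => In e F) Hlfp. have Haq := wsum_nonneg (P := fun e => In e F) Hlfq.
have Hsp0 := wsum_nonneg (P := fun e => In e F) Hlrp. have Hsq0 := wsum_nonneg (P := fun e => In e F) Hlrq.
fold ap in Hap. fold aq in Haq. fold sp in Hsp0. fold sq in Hsq0.
have HWp := fun i => wcomb_nonneg (P := fun e => In e F) i Hlrp. have HWq := fun i => wcomb_nonneg (P := fun e => In e F) i Hlrq.
set al := t * ap + (1 - t) * aq.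
destruct (Rlt_or_le al 1) as [Hal|Hal].
- exfalso. apply Hn.
  exists (app (scale (t / (1 - al)) (lr f lp)) (scale ((1 - t) / (1 - al)) (lr f lq))).
  have Hinv : 0 < / (1 - al) by apply Rinv_0_lt_compat; lra.
  split; [|split].
  + apply Forall_app; split; apply Forall_map; apply Forall_forall; intros [y e] He;
      apply filter_In in He; destruct He as [He Hne]; simpl in Hne |- *.
    * have := proj1 (Forall_forall _ _) Hp1 _ He. intros [HeF Hy]; simpl in HeF, Hy. split.
      { apply filter_In; split; [exact HeF|exact Hne]. }
      apply Rmult_le_pos; [|exact Hy]. apply Rmult_le_pos; lra.
    * have := proj1 (Forall_forall _ _) Hq1 _ He. intros [HeF Hy]; simpl in HeF, Hy. split.
      { apply filter_In; split; [exact HeF|exact Hne]. }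
      apply Rmult_le_pos; [|exact Hy]. apply Rmult_le_pos; lra.
  + rewrite wsum_app !wsum_scale. fold sp sq. rewrite /al.
    have -> : sp = 1 - ap by rewrite Hp2 in Hsp; lra.
    have -> : sq = 1 - aq by rewrite Hq2 in Hsq; lra.
    field. rewrite /al in Hal. lra.
  + intro i. rewrite wcomb_app !wcomb_scale.
    have Hi : t * wcomb (lr f lp) i + (1 - t) * wcomb (lr f lq) i <= (1 - al) * pt f i.
    { have H1 := Hp3 i. have H2 := Hq3 i. rewrite Hcp in H1. rewrite Hcq in H2.
      have H1' := Rmult_le_compat_l t _ _ (Rlt_le _ _ Ht0) H1.
      have H2' := Rmult_le_compat_l (1 - t) _ _ ltac:(lra) H2.
      have := Hf i. rewrite /al /pt. intro Hfi. rewrite /pt in H1' H2'. nra. }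
    have := Rmult_le_compat_r _ _ _ (Rlt_le _ _ Hinv) Hi.
    have -> : (1 - al) * pt f i * / (1 - al) = pt f i by field; lra.
    intro H. rewrite /Rdiv. nra.
- have Hap1 : ap <= 1 by lra. have Haq1 : aq <= 1 by lra.
  have Hap2 : ap = 1 by rewrite /al in Hal; nra.
  have Haq2 : aq = 1 by rewrite /al in Hal; nra.
  intro i. have H1 := Hp3 i. have H2 := Hq3 i. rewrite Hcp Hap2 in H1. rewrite Hcq Haq2 in H2.
  have := HWp i. have := HWq i. have := Hf i. rewrite /pt in H1 H2 |- *. intros Hfi Hw1 Hw2.
  have Hpf : 0 <= p i - INR (f i) by lra. have Hqf : 0 <= q i - INR (f i) by lra.
  have E1 : t * (p i - INR (f i)) + (1 - t) * (q i - INR (f i)) = 0.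
  { nra. }
  have P1 := Rmult_le_pos t _ (Rlt_le _ _ Ht0) Hpf. have P2 := Rmult_le_pos (1 - t) _ ltac:(lra) Hqf.
  have Z1 : t * (p i - INR (f i)) = 0 by lra. have Z2 : (1 - t) * (q i - INR (f i)) = 0 by lra.
  destruct (Rmult_integral _ _ Z1) as [Z|Z]; [lra|].
  destruct (Rmult_integral _ _ Z2) as [Z'|Z']; [lra|]. lra.
Qed.

Lemma drop_len f (F : list (mon m)) : In f F -> (length (drop_f f F) < length F)%coq_nat.
Proof. rewrite /drop_f. induction F as [|g F IH]; [intros []|]. intros Hf. simpl.
case E: (meq g f) => /=.
- have : (length (List.filter (fun g0 => ~~ meq g0 f) F) <= length F)%coq_nat.
  { clear. induction F as [|h F IH]; simpl; [lia|]. case: (meq h f) => /=; lia. }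
  lia.
- destruct Hf as [Hf|Hf]; [subst g; exfalso; move: E; rewrite (proj2 (meqP f f) erefl); done|].
  specialize (IH Hf). lia.
Qed.

Lemma elim_lem n : forall F : list (mon m), (length F <= n)%coq_nat -> exists F',
  (forall x, In x F' -> In x F) /\ nle (fun e => In e F) (fun e => In e F') /\
  forall f, In f F' -> is_vertex (NP (fun e => In e F')) (pt f).
Proof.
induction n as [|n IH]; intros F HF;
  (destruct (classic (forall f, In f F -> is_vertex (NP (fun e => In e F)) (pt f))) as [Hall|Hnot];
   [exists F; split; [auto|split; [apply nle_refl|exact Hall]]|]).
- exfalso; apply Hnot. destruct F; [intros f []|simpl in HF; lia].
- destruct (not_all_ex_not _ _ Hnot) as [f Hf].
  destruct (imply_to_and _ _ Hf) as [HfF Hnv].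
  have HNP : NP (fun e => In e (drop_f f F)) (pt f).
  { apply NNPP. intro H. exact (Hnv (step HfF H)). }
  have Hlen := drop_len HfF.
  destruct (IH (drop_f f F) ltac:(lia)) as [F' [H1 [H2 H3]]].
  exists F'. split; [|split; [|exact H3]].
  + intros x Hx. have := H1 x Hx. intro Hx'. apply filter_In in Hx'. tauto.
  + eapply nle_trans; [|exact H2]. intros g Hg. case E: (meq g f).
    * move/meqP: E => ->. exact HNP.
    * apply NP_pt. apply filter_In. split; [exact Hg|]. by rewrite E.
Qed.

Lemma le_vert (A : mset m) : nle A (vert A).
Proof.
destruct (dickson A) as [F [HF1 HF2]].
destruct (elim_lem (le_n (length F))) as [F' [Hi [Hle Hv]]].
have HAF : nle A (fun e => In e F).
{ intros a Ha. destruct (HF2 a Ha) as [f [Hf Hfa]]. apply (NP_up (NP_pt Hf)).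
  intro i. apply le_INR. apply/ssrnat.leP. apply Hfa. }
have HF'A : nle (fun e => In e F') A by apply nle_sub; intros e He; apply HF1, Hi, He.
have Hiff := NP_iff HF'A (nle_trans HAF Hle).
apply (nle_trans HAF), (nle_trans Hle), nle_sub. intros f Hf. exact (vertex_ext Hiff (Hv f Hf)).
Qed.

Lemma vert_fin (A : mset m) : exists F : list (mon m), forall v, vert A v -> In v F.
Proof.
destruct (dickson A) as [F [HF1 HF2]]. exists F. intros v Hv.
destruct (HF2 v (vert_sub Hv)) as [f [Hf Hfv]].
have := ext_le Hv (NP_pt (HF1 f Hf)) ltac:(intro i; apply le_INR; apply/ssrnat.leP; apply Hfv).
intro H. rewrite -(pt_inj H). exact Hf.
Qed.

Lemma neq_vert (A : mset m) : nle A (vert A) /\ nle (vert A) A.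
Proof. split; [apply le_vert|apply vert_le]. Qed.

Lemma uniq_dec (A B : mset m) v a b a' b' : vert (msum A B) v ->
  A a -> B b -> (forall i, v i = (a i + b i)%nat) ->
  A a' -> B b' -> (forall i, v i = (a' i + b' i)%nat) -> a = a'.
Proof.
intros [_ Hv] Ha Hb Hab Ha' Hb' Hab'.
have Hp : NP (msum A B) (pt (fun i => (a i + b' i)%nat)).
{ apply NP_pt. exists a, b'. split; [exact Ha|split; [exact Hb'|reflexivity]]. }
have Hq : NP (msum A B) (pt (fun i => (a' i + b i)%nat)).
{ apply NP_pt. exists a', b. split; [exact Ha'|split; [exact Hb|reflexivity]]. }
have H := Hv _ _ (/2) Hp Hq ltac:(lra) ltac:(lra).
have H' : forall i, pt (fun i => (a i + b' i)%nat) i = pt (fun i => (a' i + b i)%nat) i.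
{ apply H. intro i. rewrite /pt !plus_INR.
  have E1 := f_equal INR (Hab i). have E2 := f_equal INR (Hab' i). rewrite plus_INR in E1 E2.
  rewrite plus_INR in E2. lra. }
apply functional_extensionality => i. have := INR_eq _ _ (H' i).
have := Hab i. have := Hab' i. lia.
Qed.

End Geo.

Local Open Scope ring_scope.

Section PS.
Variable m : nat.
Variable K : fieldType.

Lemma le_sum_mon (e : mon m) i : (e i <= \sum_(j < m) e j)%N.
Proof. by rewrite (bigD1 i) //= leq_addr. Qed.

Lemma pmul_supp_sub (f g : pser m K) e : supp (pmul f g) e -> msum (supp f) (supp g) e.
Proof.
rewrite /supp => H. apply NNPP => Hn. move/eqP: H; apply.
rewrite /pmul big1 // => A HA.
have [Hf|Hf] := eqVneq (f (fun i => nat_of_ord (A i))) 0; first by rewrite Hf mul0r.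
have [Hg|Hg] := eqVneq (g (fun i => (e i - A i)%N)) 0; first by rewrite Hg mulr0.
exfalso; apply Hn. exists (fun i => nat_of_ord (A i)), (fun i => (e i - A i)%N).
split; [exact Hf|split; [exact Hg|]]. move=> i /=. move/forallP: HA => /(_ i). by move=> H; rewrite subnKC.
Qed.

Lemma pmul_vert (f g : pser m K) v : vert (msum (supp f) (supp g)) v -> supp (pmul f g) v.
Proof.
move=> Hv. have [a [b [Ha [Hb Hab]]]] := vert_sub Hv.
have Hai : forall i, (a i < pbound v)%N.
{ move=> i. rewrite /pbound ltnS. apply: leq_trans (le_sum_mon v i). rewrite Hab. apply leq_addr. }
pose A0 : {ffun 'I_m -> 'I_(pbound v)} := [ffun i => Ordinal (Hai i)].
have HA0 : (fun i => nat_of_ord (A0 i)) = a by apply functional_extensionality => i; rewrite ffunE.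
have HB0 : (fun i => (v i - A0 i)%N) = b.
{ apply functional_extensionality => i; rewrite ffunE /= Hab. lia. }
rewrite /supp /pmul (bigD1 A0) /=; last first.
{ apply/forallP => i. rewrite ffunE /= Hab. apply leq_addr. }
rewrite big1 ?addr0.
- rewrite HA0 HB0. exact: mulf_neq0.
- move=> A /andP [HA HAne].
  have [Hf|Hf] := eqVneq (f (fun i => nat_of_ord (A i))) 0; first by rewrite Hf mul0r.
  have [Hg|Hg] := eqVneq (g (fun i => (v i - A i)%N)) 0; first by rewrite Hg mulr0.
  exfalso. move/eqP: HAne; apply.
  have := uniq_dec Hv Ha Hb Hab Hf Hg. move=> Hu.
  have /(_ _) Hu' := Hu. rewrite /= in Hu.
  apply/ffunP => i. apply val_inj. rewrite ffunE /=.
  have := f_equal (fun h => h i) (Hu ltac:(move=> j; move/forallP: HA => /(_ j); lia)).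
  by move=> ->.
Qed.
Lemma pmul_const (c : K) (f : pser m K) e : pmul (pconst c) f e = c * f e.
Proof.
pose Z0 : {ffun 'I_m -> 'I_(pbound e)} := [ffun i => ord0].
rewrite /pmul (bigD1 Z0) /=; last by apply/forallP => i; rewrite ffunE.
rewrite big1 ?addr0.
- have -> : (fun i => nat_of_ord (Z0 i)) = (fun _ => 0%N) by apply functional_extensionality => i; rewrite ffunE.
  have -> : (fun i => (e i - Z0 i)%N) = e by apply functional_extensionality => i; rewrite ffunE subn0.
  rewrite /pconst. by have -> : [forall i : 'I_m, (0 == 0)%N] by apply/forallP.
- move=> A /andP [_ HA]. rewrite /pconst.
  case: ifP => H; last by rewrite mul0r.
  exfalso. move/eqP: HA; apply. apply/ffunP => i. apply val_inj. rewrite ffunE /=.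
  by move/forallP: H => /(_ i) /eqP.
Qed.

Lemma pmul_scale (c : K) (h g : pser m K) e : pmul (fun e => c * h e) g e = c * pmul h g e.
Proof. rewrite /pmul mulr_sumr. apply eq_bigr => A _. by rewrite mulrA. Qed.

Lemma key_mul (f g : pser m K) : nle (supp (pmul f g)) (msum (supp f) (supp g)) /\
  nle (msum (supp f) (supp g)) (supp (pmul f g)).
Proof. split.
- apply nle_sub => e. apply pmul_supp_sub.
- apply (nle_trans (@le_vert _ _)). apply nle_sub => e. apply pmul_vert.
Qed.

Lemma natr_injK (n k : nat) : [pchar K] =i pred0 -> n%:R = k%:R :> K -> n = k.
Proof.
move=> /pcharf0P H E.
wlog nk : n k E / (n <= k)%N.
{ move=> W. case: (leqP n k) => Hnk; first exact: W. symmetry. apply: W => //. exact: ltnW. }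
have : (k - n)%:R == 0 :> K by rewrite natrB // E subrr.
rewrite H => /eqP. lia.
Qed.

Lemma In_map_seq (T : Type) (h : T -> K) (F : list T) v : In v F -> h v \in [seq h x | x <- F].
Proof. elim: F => [//|x F IH] /= [->|Hv]; rewrite inE; apply/orP; [left|right; exact: IH Hv]. done. Qed.

Lemma exists_nat_notin (s : seq K) : [pchar K] =i pred0 -> exists n, n.+1%:R \notin s.
Proof.
move=> Hc. apply NNPP => Hn.
have Hall : forall n, n.+1%:R \in s.
{ move=> n. apply NNPP => H. apply Hn. exists n. by apply/negP. }
set t := [seq n.+1%:R | n <- iota 0 (size s).+1] : seq K.
have Hu : uniq t.
{ rewrite map_inj_uniq ?iota_uniq // => a b E. have := natr_injK Hc E. lia. }
have Hsub : {subset t <= s} by move=> x /mapP [n _ ->]; exact: Hall.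
have := uniq_leq_size Hu Hsub. by rewrite size_map size_iota ltnn.
Qed.

Lemma generic_c (u w : pser m K) : [pchar K] =i pred0 -> exists c : K, c != 0 /\
  nle (munion (supp u) (supp w)) (supp (fun e => u e + c * w e)) /\
  nle (supp (fun e => u e + c * w e)) (munion (supp u) (supp w)).
Proof.
move=> Hc. have [F HF] := @vert_fin _ (munion (supp u) (supp w)).
have [n Hn] := exists_nat_notin [seq - u v / w v | v <- F] Hc.
exists n.+1%:R. split; [|split].
- move/pcharf0P: Hc => ->. done.
- apply (nle_trans (@le_vert _ _)). apply nle_sub => v Hv.
  have HvF := HF v Hv. have := vert_sub Hv. rewrite /supp /munion => Hu.
  have [Hw|Hw] := eqVneq (w v) 0.
  + rewrite Hw mulr0 addr0. case: Hu => [H|H]; [exact H|by rewrite Hw eqxx in H].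
  + apply/negP => /eqP E. move/negP: Hn; apply.
    have -> : n.+1%:R = - u v / w v :> K.
    { rewrite -(mulfK Hw n.+1%:R). congr (_ / w v). apply/eqP. by rewrite -addr_eq0 addrC E. }
    exact: (In_map_seq (fun v => - u v / w v) HvF).
- apply nle_sub => e. rewrite /supp /munion => H.
  apply NNPP => Hn'. move/negP: H; apply. have Hu : u e = 0 by apply/eqP; apply NNPP => Hx; apply Hn'; left; apply/negP.
  have Hw : w e = 0 by apply/eqP; apply NNPP => Hx; apply Hn'; right; apply/negP.
  by rewrite Hu Hw mulr0 addr0.
Qed.

End PS.

Section Alg.
Variable m : nat.
Definition nequiv (A B : mset m) := nle A B /\ nle B A.
Lemma nq_refl A : nequiv A A. Proof. split; apply nle_refl. Qed.
Lemma nq_sym A B : nequiv A B -> nequiv B A. Proof. by case. Qed.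
Lemma nq_trans A B C : nequiv A B -> nequiv B C -> nequiv A C.
Proof. move=> [H1 H2] [H3 H4]; split; eapply nle_trans; eassumption. Qed.
Lemma nq_sub A B : (forall e, A e <-> B e) -> nequiv A B.
Proof. move=> H; split; apply nle_sub => e; apply H. Qed.
Lemma nq_vert A : nequiv (vert A) A. Proof. split; [apply vert_le|apply le_vert]. Qed.
Lemma nq_msum A A' B B' : nequiv A A' -> nequiv B B' -> nequiv (msum A B) (msum A' B').
Proof. move=> [H1 H2] [H3 H4]; split; apply msum_le; assumption. Qed.
Lemma nq_munion A A' B B' : nequiv A A' -> nequiv B B' -> nequiv (munion A B) (munion A' B').
Proof. move=> [H1 H2] [H3 H4]; split; apply munion_le; assumption. Qed.
Lemma nq_comm A B : nequiv (msum A B) (msum B A).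
Proof. split; apply nle_sub => e; apply msum_comm_sub. Qed.
Lemma nq_assoc A B C : nequiv (msum (msum A B) C) (msum A (msum B C)).
Proof. apply nq_sub => e; split.
- move=> [x [c [[a [b [Ha [Hb Hx]]]] [Hc He]]]]. exists a, (fun i => (b i + c i)%N).
  split; [exact Ha|split; [exists b, c; split; [exact Hb|split; [exact Hc|done]]|]].
  move=> i. rewrite He Hx. apply esym, addnA.
- move=> [a [x [Ha [[b [c [Hb [Hc Hx]]]] He]]]]. exists (fun i => (a i + b i)%N), c.
  split; [exists a, b; split; [exact Ha|split; [exact Hb|done]]|split; [exact Hc|]].
  move=> i. rewrite He Hx. apply addnA.
Qed.
Lemma nq_one A : nequiv (msum A (@vb1 m)) A.
Proof. apply nq_sub => e; split.
- move=> [a [b [Ha [Hb He]]]]. have -> : e = a; last done.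
  apply functional_extensionality => i. by rewrite He Hb addn0.
- move=> He. exists e, (fun _ => 0%N). split; [exact He|split; [done|]]. move=> i; by rewrite addn0.
Qed.
Lemma nq_uid A : nequiv (munion A A) A.
Proof. apply nq_sub => e; rewrite /munion; tauto. Qed.
Lemma nq_vbmul A B : nequiv (vbmul A B) (msum A B). Proof. exact: nq_vert. Qed.
Lemma nq_vbplus A B : nequiv (vbplus A B) (munion A B). Proof. exact: nq_vert. Qed.
Lemma nq_same A B : nequiv A B -> sameset (vert A) (vert B).
Proof. move=> [H1 H2]. exact: vert_eq. Qed.

Variable K : fieldType.
Lemma nq_T (f : pser m K) : nequiv (trop_ps f) (supp f). Proof. exact: nq_vert. Qed.
Lemma nq_Tmul (f g : pser m K) : nequiv (msum (trop_ps f) (trop_ps g)) (supp (pmul f g)).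
Proof. apply: nq_trans (nq_msum (nq_T f) (nq_T g)) _. have [H1 H2] := key_mul f g. by split. Qed.
Lemma nq_TT (f g : pser m K) : nequiv (trop_ps (pmul f g)) (msum (trop_ps f) (trop_ps g)).
Proof. apply: nq_trans (nq_T _) _. apply nq_sym, nq_Tmul. Qed.
End Alg.

Section Main.
Variable m : nat.
Variable K : fieldType.

Lemma msum_union_sub (A B C : mset m) e : msum (munion A B) C e -> munion (msum A C) (msum B C) e.
Proof. move=> [a [c [[Ha|Ha] [Hc He]]]]; [left|right]; exists a, c; tauto. Qed.

Lemma shape3 (X1 P Q : mset m) : nle X1 Q ->
  nequiv (msum (munion (msum X1 P) (msum P Q)) P) (msum (msum P P) Q).
Proof.
move=> HX. have E1 : nequiv (msum (msum Q P) P) (msum (msum P P) Q).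
{ apply: nq_trans (nq_assoc _ _ _) _. apply nq_comm. }
have E2 : nequiv (msum (msum P Q) P) (msum (msum P P) Q).
{ apply: nq_trans (nq_comm _ _) _. apply nq_sym, nq_assoc. }
split.
- apply: nle_trans; first by apply nle_sub => e; apply msum_union_sub.
  apply munion_least.
  + apply: nle_trans (proj1 E1). apply msum_le; [|apply nle_refl]. apply msum_le; [exact HX|apply nle_refl].
  + exact: proj1 E2.
- apply: nle_trans (proj2 E2) _. apply msum_le; [|apply nle_refl].
  apply nle_sub => e He; right; exact He.
Qed.

Lemma supp_padd (u w : pser m K) e : supp (padd u w) e -> munion (supp u) (supp w) e.
Proof. rewrite /supp /padd /munion => H. apply NNPP => Hn. move/negP: H; apply.
have -> : u e = 0 by apply/eqP; apply NNPP => Hx; apply Hn; left; apply/negP.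
have -> : w e = 0 by apply/eqP; apply NNPP => Hx; apply Hn; right; apply/negP.
by rewrite addr0. Qed.

Lemma supp_const (c : K) : c != 0 -> forall e : mon m, supp (pconst c) e <-> vb1 e.
Proof. move=> Hc e. rewrite /supp /pconst /vb1. split.
- case: ifP => [/forallP H _ i|_]; [exact/eqP/H|by rewrite eqxx].
- move=> H. have -> : [forall i, e i == 0%N] by apply/forallP => i; rewrite H.
  exact Hc. Qed.

Lemma nq_Tc (c : K) : c != 0 -> nequiv (trop_ps (pconst c)) (@vb1 m).
Proof. move=> Hc. apply: nq_trans (nq_T _) _. exact: nq_sub (supp_const Hc). Qed.

Lemma nq_vbmul1 (X : mset m) : nequiv X (@vb1 m) -> nequiv (vbmul X (@vb1 m)) (@vb1 m).
Proof. move=> H. apply: nq_trans (nq_vbmul _ _) _. exact: nq_trans (nq_one X) H. Qed.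

Lemma lvalid_const (c : K) : c != 0 -> lvalid (lconst m c).
Proof. move=> Hc Hz. have := Hz (fun _ => 0%N). rewrite /lconst /pconst /=.
case: ifP => [_ /eqP|H _]; first by rewrite oner_eq0.
move/negbT/negP: H; apply. by apply/forallP. Qed.

Lemma vbfle_const (c : K) : c != 0 -> vbfle (trop (lconst m c)) (vbf1 m).
Proof.
move=> Hc. rewrite /vbfle /vbeq /vbfplus /trop /lconst /vbf1 /=.
have H1 := nq_vbmul1 (nq_Tc Hc). have H2 := nq_vbmul1 (nq_Tc (@oner_neq0 K)).
apply nq_same. apply: nq_trans (nq_one _) _. apply: nq_trans (nq_vbplus _ _) _.
apply: nq_trans (nq_munion H1 H2) _. apply: nq_trans (nq_uid _) _.
apply nq_sym. apply: nq_trans (nq_one _) _. exact H2.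
Qed.
End Main.

Local Open Scope ring_scope.

Theorem proposition2p19 (K : fieldType) (m : nat) :
  [pchar K] =i pred0 -> (0 < m)%N ->
  (* trop is well defined on K((t)) *)
  (forall q q' : lfrac m K, lvalid q -> lvalid q' -> leq_frac q q' ->
     vbeq (trop q) (trop q')) /\
  (* multiplicative *)
  (forall p q : lfrac m K, lvalid p -> lvalid q ->
     vbeq (trop (lmul p q)) (vbfmul (trop p) (trop q))) /\
  (* trop(a+b) <= trop a (+) trop b *)
  (forall p q : lfrac m K, lvalid p -> lvalid q ->
     vbfle (trop (ladd p q)) (vbfplus (trop p) (trop q))) /\
  (* zero only at 0 *)
  (forall q : lfrac m K, lvalid q -> (vbeq (trop q) (vbf0 m) <-> pzero q.1)) /\
  (* surjective onto VB(t) *)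
  (forall x : vbfrac m, isVBf x -> exists q : lfrac m K, lvalid q /\ vbeq (trop q) x) /\
  (* K-algebra *)
  (forall c : K, c != 0 -> vbeq (trop (lconst m c)) (vbf1 m)) /\
  (* Bezout *)
  (forall a b : lfrac m K, lvalid a -> lvalid b ->
     exists x y : lfrac m K, lvalid x /\ lvalid y /\
       vbfle (trop x) (vbf1 m) /\ vbfle (trop y) (vbf1 m) /\
       vbeq (trop (ladd (lmul x a) (lmul y b))) (vbfplus (trop a) (trop b))).
Proof.
move=> Hc _.
split; [|split; [|split; [|split; [|split; [|split]]]]].
-
  move=> [f g] [h k] _ _ Hq. rewrite /leq_frac /= in Hq. rewrite /vbeq /trop /=.
  have E : pmul f k = pmul h g.
  { apply functional_extensionality => e. apply/eqP. rewrite -subr_eq0. apply/eqP. exact: Hq e. }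
  apply nq_same. apply: nq_trans (nq_Tmul f k) _. rewrite E.
  apply: nq_trans (nq_sym (nq_Tmul h g)) _. apply nq_comm.
-
  move=> [f g] [h k] _ _. rewrite /vbeq /trop /lmul /vbfmul /=.
  apply nq_same. apply: nq_trans (nq_msum (nq_TT f h) (nq_vbmul _ _)) _.
  apply: nq_trans (nq_comm _ _) _. apply nq_sym.
  apply: nq_trans (nq_msum (nq_TT g k) (nq_vbmul _ _)) _. apply nq_refl.
-
  move=> [f g] [h k] _ _. rewrite /vbfle /vbeq /vbfplus /trop /ladd /=.
  set P := msum (trop_ps g) (trop_ps k).
  set Q := munion (msum (trop_ps f) (trop_ps k)) (msum (trop_ps g) (trop_ps h)).
  set X1 := trop_ps (padd (pmul f k) (pmul h g)).
  have hX2 : nequiv (trop_ps (pmul g k)) P := nq_TT g k.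
  have hY2 : nequiv (vbmul (trop_ps g) (trop_ps k)) P := nq_vbmul _ _.
  have hY1 : nequiv (vbplus (vbmul (trop_ps f) (trop_ps k)) (vbmul (trop_ps g) (trop_ps h))) Q.
  { apply: nq_trans (nq_vbplus _ _) _. apply nq_munion; apply nq_vbmul. }
  have hX1 : nle X1 Q.
  { apply: nle_trans (proj1 (nq_T _)) _. apply: nle_trans; first by apply nle_sub => e; apply supp_padd.
    apply munion_le; first exact: proj2 (nq_Tmul f k).
    apply: nle_trans (proj2 (nq_Tmul h g)) _. exact: proj1 (nq_comm _ _). }
  apply nq_same.
  apply: nq_trans (nq_msum (nq_trans (nq_vbplus _ _) (nq_munion (nq_trans (nq_vbmul _ _) (nq_msum (nq_refl X1) hY2)) (nq_trans (nq_vbmul _ _) (nq_msum hX2 hY1)))) hY2) _.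
  apply: nq_trans (shape3 P hX1) _. apply nq_sym.
  exact: nq_msum (nq_trans (nq_vbmul _ _) (nq_msum hX2 hY2)) hY1.
-
  move=> [f g] _ /=. rewrite /vbeq /trop /vbf0 /=.
  have E0 : forall e, ~ vbmul (trop_ps g) (@vb0 m) e.
  { move=> e He. have [a [b [_ [Hb _]]]] := vert_sub (A := msum (trop_ps g) (@vb0 m)) He. exact Hb. }
  have E1 : nequiv (vbmul (trop_ps f) (@vb1 m)) (supp f).
  { apply: nq_trans (nq_vbmul _ _) _. apply: nq_trans (nq_one _) _. apply nq_T. }
  split.
  + move=> H e. apply/eqP. apply NNPP => Hne.
    have HN := proj2 E1 e (introT negP Hne).
    apply: (NP_empty (A := vbmul (trop_ps f) (@vb1 m)) _ HN).
    move=> e' He'. apply: (E0 e'). by apply H.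
  + move=> Hz e. split => He; last by exfalso; exact: E0 He.
    exfalso. have [a [b [Ha _]]] := vert_sub (A := msum (trop_ps f) (@vb1 m)) He.
    have := vert_sub Ha. rewrite /supp Hz. by rewrite eqxx.
-
  move=> [A B] [_ [_ [e0 He0]]].
  pose ind (X : mset m) : pser m K := fun e => if excluded_middle_informative (X e) then 1 else 0.
  have Hs : forall X e, supp (ind X) e <-> X e.
  { move=> X e. rewrite /supp /ind. case: excluded_middle_informative => H; split => //.
    - by rewrite oner_eq0.
    - by rewrite eqxx. }
  exists (ind A, ind B). split.
  + move=> Hz. have := Hz e0. rewrite /ind /=.
    destruct (excluded_middle_informative (B e0)) as [H|H]; [|contradiction].
    move/eqP. by rewrite oner_eq0.
  + rewrite /vbeq /trop /=. apply nq_same.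
    apply: nq_trans (nq_msum (nq_trans (nq_T _) (nq_sub (Hs A))) (nq_refl B)) _.
    apply: nq_trans (nq_comm _ _) _. apply nq_msum; [apply nq_sym|apply nq_refl].
    exact: nq_trans (nq_T _) (nq_sub (Hs B)).
-
  move=> c Hc0. rewrite /vbeq /trop /lconst /vbf1 /=.
  apply nq_same. apply nq_msum; [|apply nq_refl].
  have H1 := @nq_Tc m K c Hc0. have H2 := @nq_Tc m K 1 (@oner_neq0 K).
  exact: nq_trans H1 (nq_sym H2).
-
  move=> [f g] [h k] _ _.
  have [c [Hc0 [Hu1 Hu2]]] := generic_c (pmul f k) (pmul h g) Hc.
  exists (lconst m 1), (lconst m c).
  split; [exact: lvalid_const (@oner_neq0 K)|].
  split; [exact: lvalid_const Hc0|].
  split; [exact: vbfle_const (@oner_neq0 K)|].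
  split; [exact: vbfle_const Hc0|].
  have E1 : forall u : pser m K, pmul (pconst 1) u = u.
  { move=> u. apply functional_extensionality => e. by rewrite pmul_const mul1r. }
  have Ec : pmul (pconst c) h = (fun e => c * h e).
  { apply functional_extensionality => e. by rewrite pmul_const. }
  have Es : pmul (fun e => c * h e) g = (fun e => c * pmul h g e).
  { apply functional_extensionality => e. by rewrite pmul_scale. }
  rewrite /vbeq /trop /ladd /lmul /lconst /vbfplus /=. rewrite !E1 Ec Es.
  set P := msum (trop_ps g) (trop_ps k).
  set Q := munion (msum (trop_ps f) (trop_ps k)) (msum (trop_ps g) (trop_ps h)).
  have hnum : nequiv (trop_ps (padd (pmul f k) (fun e => c * pmul h g e))) Q.
  { apply: nq_trans (nq_T _) _. apply: nq_trans; first exact: (conj Hu2 Hu1).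
    apply nq_munion; first exact: nq_sym (nq_Tmul f k).
    apply: nq_trans (nq_sym (nq_Tmul h g)) _. apply nq_comm. }
  apply nq_same. apply: nq_trans (nq_msum hnum (nq_vbmul _ _)) _.
  apply: nq_trans (nq_comm _ _) _. apply nq_sym.
  apply: nq_trans (nq_msum (nq_TT g k) (nq_trans (nq_vbplus _ _) (nq_munion (nq_vbmul _ _) (nq_vbmul _ _)))) _.
  apply nq_refl.
Qed.
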